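(* Let $T$ be a $\delta$-Jordan Lie supertriple system over a field $\mathbb{K}$ with $H^3_\delta(T,T)=0$. Then $T$ is analytically rigid, i.e. every 1-parameter formal deformation $f_t$ of $T$ is equivalent to the null deformation $f_0$.
   Context: A $\delta$-Jordan Lie supertriple system ($\delta\in\{1,-1\}$) is a $\mathbb{Z}_2$-graded vector space $T$ with a trilinear product $[\cdot,\cdot,\cdot]$ such that, for all homogeneous $a,b,c,d,e$ (with $|a|$ the degree of $a$): (A1) $|[a,b,c]|=|a|+|b|+|c|$; (A2) $[b,a,c]=-\delta(-1)^{|a||b|}[a,b,c]$; (A3) $(-1)^{|a||c|}[a,b,c]+(-1)^{|b||a|}[b,c,a]+(-1)^{|c||b|}[c,a,b]=0$; (A4) $[a,b,[c,d,e]]=[[a,b,c],d,e]+(-1)^{|c|(|a|+|b|)}[c,[a,b,d],e]+\delta(-1)^{(|a|+|b|)(|c|+|d|)}[c,d,[a,b,e]]$. A 1-parameter formal deformation of $T$ is $f_t=\sum_{i\ge0}f_i t^i$ where each $f_i:T\times T\times T\to T$ is $\mathbb{K}$-trilinear (extended $\mathbb{K}[[t]]$-trilinearly to $T[[t]]$), $f_0(x_1,x_2,x_3)=[x_1,x_2,x_3]$, and $f_t$ satisfies (A1)–(A4) with $[\cdot,\cdot,\cdot]$ replaced by $f_t$. The null deformation is the one with $f_i=0$ for all $i\ge1$ (i.e. $f_t=f_0$). Two deformations $f_t,f'_t$ are equivalent if there is $\phi_t=\sum_{i\ge0}\phi_it^i$, $\phi_0=id_T$, $\phi_i:T\to T$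 $\mathbb{K}$-linear (extended $\mathbb{K}[[t]]$-linearly), with $\phi_t f_t(x_1,x_2,x_3)=f'_t(\phi_t(x_1),\phi_t(x_2),\phi_t(x_3))$ for all $x_1,x_2,x_3$. Cohomology with adjoint coefficients: let $\theta(a,b)(x)=(-1)^{|x|(|a|+|b|)}[x,a,b]$ and $D(a,b)(x)=\delta[a,b,x]$. $C^1_\delta(T,T)$ is the space of linear maps $T\to T$; $C^3_\delta(T,T)$ is the space of trilinear $f:T^3\to T$ with $f(x_2,x_1,x_3)=-\delta(-1)^{|x_1||x_2|}f(x_1,x_2,x_3)$ and $(-1)^{|x_1||x_3|}f(x_1,x_2,x_3)+(-1)^{|x_2||x_1|}f(x_2,x_3,x_1)+(-1)^{|x_3||x_2|}f(x_3,x_1,x_2)=0$. For homogeneous $f$: $d^{1}f(x_1,x_2,x_3)=(-1)^{(|f|+|x_1|)(|x_2|+|x_3|)}\theta(x_2,x_3)f(x_1)-f([x_1,x_2,x_3])+\delta(-1)^{|f|(|x_1|+|x_2|)}D(x_1,x_2)f(x_3)-\delta(-1)^{|x_2||x_3|+|f|(|x_1|+|x_3|)}\theta(x_1,x_3)f(x_2)$; $d^{3}f(x_1,\dots,x_5)=(-1)^{(|f|+|x_1|+|x_2|+|x_3|)(|x_4|+|x_5|)}\theta(x_4,x_5)f(x_1,x_2,x_3)-\delta(-1)^{(|f|+|x_1|+|x_2|)(|x_3|+|x_5|)+|x_4||x_5|}\theta(x_3,x_5)f(x_1,x_2,x_4)-\delta(-1)^{|f|(|x_1|+|x_2|)}D(x_1,x_2)f(x_3,x_4,x_5)+(-1)^{(|f|+|x_1|+|x_2|)(|x_3|+|x_4|)}D(x_3,x_4)f(x_1,x_2,x_5)+f([x_1,x_2,x_3],x_4,x_5)-f(x_1,x_2,[x_3,x_4,x_5])+(-1)^{|x_3|(|x_1|+|x_2|)}f(x_3,[x_1,x_2,x_4],x_5)+\delta(-1)^{(|x_1|+|x_2|)(|x_3|+|x_4|)}f(x_3,x_4,[x_1,x_2,x_5])$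 (extended linearly). $Z^3_\delta(T,T)=\{f\in C^3_\delta(T,T)\mid d^3f=0\}$, $B^3_\delta(T,T)=d^1C^1_\delta(T,T)$, and $H^3_\delta(T,T)=Z^3_\delta(T,T)/B^3_\delta(T,T)$. *)

(* Defs.v *)
From mathcomp Require Import all_boot all_order all_algebra.
Set Implicit Arguments. Unset Strict Implicit. Unset Printing Implicit Defensive.
Import GRing.Theory.
Local Open Scope ring_scope.

(* A Z_2-graded K-vector space T is modelled as T0 * T1 (T0 = even part,
   T1 = odd part); degrees are booleans (false = 0, true = 1), addition of
   degrees is xor (+), products of degrees are &&, and (-1)^e is [sg e]. *)

Section JLSTS.
Variables (K : fieldType) (T0 T1 : lmodType K).
Local Notation V := (T0 * T1)%type.

Definition sg (e : bool) : K := if e then -1 else 1.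

Definition homog (d : bool) (x : V) : Prop := if d then x.1 = 0 else x.2 = 0.

Definition pr (d : bool) (x : V) : V := if d then (0, x.2) else (x.1, 0).

Definition linear1 (g : V -> V) : Prop :=
  forall (k : K) (x y : V), g (k *: x + y) = k *: g x + g y.

Definition trilinear (f : V -> V -> V -> V) : Prop :=
  (forall (k : K) (x y b c : V), f (k *: x + y) b c = k *: f x b c + f y b c) /\
  (forall (k : K) (a x y c : V), f a (k *: x + y) c = k *: f a x c + f a y c) /\
  (forall (k : K) (a b x y : V), f a b (k *: x + y) = k *: f a b x + f a b y).

(* Conditions (A1)-(A4) for a ternary product [br] on a carrier U with a notion
   of homogeneity [hom], addition [add] and K-scaling [scl]; they are used
   both for T (U = V) and for T[[t]] (U = nat -> V). *)
Section TripleLaws.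
Variables (U : Type) (hom : bool -> U -> Prop) (add : U -> U -> U)
          (scl : K -> U -> U) (zero : U) (delta : K) (br : U -> U -> U -> U).

Definition axA1 : Prop := forall a b c da db dc,
  hom da a -> hom db b -> hom dc c -> hom (da (+) db (+) dc) (br a b c).

Definition axA2 : Prop := forall a b c da db dc,
  hom da a -> hom db b -> hom dc c ->
  br b a c = scl (- delta * sg (da && db)) (br a b c).

Definition axA3 : Prop := forall a b c da db dc,
  hom da a -> hom db b -> hom dc c ->
  add (add (scl (sg (da && dc)) (br a b c)) (scl (sg (db && da)) (br b c a)))
      (scl (sg (dc && db)) (br c a b)) = zero.

Definition axA4 : Prop := forall a b c d e da db dc dd de,
  hom da a -> hom db b -> hom dc c -> hom dd d -> hom de e ->
  br a b (br c d e) =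
  add (add (br (br a b c) d e)
           (scl (sg (dc && (da (+) db))) (br c (br a b d) e)))
      (scl (delta * sg ((da (+) db) && (dc (+) dd))) (br c d (br a b e))).
End TripleLaws.

Definition JLSTS (delta : K) (br : V -> V -> V -> V) : Prop :=
  trilinear br /\
  axA1 homog br /\
  axA2 homog (fun k x => k *: x) delta br /\
  axA3 homog +%R (fun k x => k *: x) 0 br /\
  axA4 homog +%R (fun k x => k *: x) delta br.

Definition ser := nat -> V.
Definition shom (d : bool) (s : ser) : Prop := forall n, homog d (s n).
Definition sadd (s u : ser) : ser := fun n => s n + u n.
Definition sscl (k : K) (s : ser) : ser := fun n => k *: s n.
Definition szero : ser := fun _ => 0.

(* K[[t]]-trilinear extension of f_t = sum_i f_i t^i to T[[t]] *)
Definition ext3 (f : nat -> V -> V -> V -> V) (x y z : ser) : ser := fun n =>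
  \sum_(i < n.+1) \sum_(j < n.+1) \sum_(k < n.+1)
    \sum_(l < n.+1 | (i + j + k + l)%N == n) f i (x j) (y k) (z l).

(* K[[t]]-linear extension of phi_t = sum_i phi_i t^i to T[[t]] *)
Definition ext1 (phi : nat -> V -> V) (x : ser) : ser := fun n =>
  \sum_(i < n.+1) \sum_(j < n.+1 | (i + j)%N == n) phi i (x j).

Definition deformation (delta : K) (br : V -> V -> V -> V)
    (f : nat -> V -> V -> V -> V) : Prop :=
  (forall i, trilinear (f i)) /\
  f 0%N = br /\
  axA1 shom (ext3 f) /\
  axA2 shom sscl delta (ext3 f) /\
  axA3 shom sadd sscl szero (ext3 f) /\
  axA4 shom sadd sscl delta (ext3 f).

Definition null_def (br : V -> V -> V -> V) : nat -> V -> V -> V -> V :=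
  fun i => if i is 0%N then br else fun _ _ _ => 0.

Definition equiv_def (f f' : nat -> V -> V -> V -> V) : Prop :=
  exists phi : nat -> V -> V,
    phi 0%N = id /\ (forall i, linear1 (phi i)) /\
    forall x1 x2 x3 : ser,
      ext1 phi (ext3 f x1 x2 x3) = ext3 f' (ext1 phi x1) (ext1 phi x2) (ext1 phi x3).

Section Cohomology.
Variables (delta : K) (br : V -> V -> V -> V).

Definition theta (da db dx : bool) (a b x : V) : V :=
  sg (dx && (da (+) db)) *: br x a b.
Definition Dop (a b x : V) : V := delta *: br a b x.

Definition comp1 (p : bool) (g : V -> V) : V -> V := fun x =>
  \sum_(d : bool) pr (d (+) p) (g (pr d x)).
Definition comp3 (p : bool) (f : V -> V -> V -> V) : V -> V -> V -> V :=
  fun x1 x2 x3 => \sum_(a : bool) \sum_(b : bool) \sum_(c : bool)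
    pr (a (+) b (+) c (+) p) (f (pr a x1) (pr b x2) (pr c x3)).

(* d^1 f for f homogeneous of degree p, on x_i homogeneous of degree d_i *)
Definition d1h (p : bool) (f : V -> V) (d1 d2 d3 : bool) (x1 x2 x3 : V) : V :=
  sg ((p (+) d1) && (d2 (+) d3)) *: theta d2 d3 (p (+) d1) x2 x3 (f x1)
  - f (br x1 x2 x3)
  + (delta * sg (p && (d1 (+) d2))) *: Dop x1 x2 (f x3)
  - (delta * sg ((d2 && d3) (+) (p && (d1 (+) d3)))) *:
      theta d1 d3 (p (+) d2) x1 x3 (f x2).

(* d^3 f for f homogeneous of degree p, on x_i homogeneous of degree d_i *)
Definition d3h (p : bool) (f : V -> V -> V -> V) (d1 d2 d3 d4 d5 : bool)
    (x1 x2 x3 x4 x5 : V) : V :=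
  sg ((p (+) d1 (+) d2 (+) d3) && (d4 (+) d5)) *:
     theta d4 d5 (p (+) d1 (+) d2 (+) d3) x4 x5 (f x1 x2 x3)
  - (delta * sg (((p (+) d1 (+) d2) && (d3 (+) d5)) (+) (d4 && d5))) *:
     theta d3 d5 (p (+) d1 (+) d2 (+) d4) x3 x5 (f x1 x2 x4)
  - (delta * sg (p && (d1 (+) d2))) *: Dop x1 x2 (f x3 x4 x5)
  + sg ((p (+) d1 (+) d2) && (d3 (+) d4)) *: Dop x3 x4 (f x1 x2 x5)
  + f (br x1 x2 x3) x4 x5
  - f x1 x2 (br x3 x4 x5)
  + sg (d3 && (d1 (+) d2)) *: f x3 (br x1 x2 x4) x5
  + (delta * sg ((d1 (+) d2) && (d3 (+) d4))) *: f x3 x4 (br x1 x2 x5).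

(* linear extensions (in f and in the arguments) of d^1 and d^3 *)
Definition d1 (f : V -> V) (x1 x2 x3 : V) : V :=
  \sum_(p : bool) \sum_(a : bool) \sum_(b : bool) \sum_(c : bool)
    d1h p (comp1 p f) a b c (pr a x1) (pr b x2) (pr c x3).

Definition d3 (f : V -> V -> V -> V) (x1 x2 x3 x4 x5 : V) : V :=
  \sum_(p : bool) \sum_(a : bool) \sum_(b : bool) \sum_(c : bool)
    \sum_(d : bool) \sum_(e : bool)
    d3h p (comp3 p f) a b c d e (pr a x1) (pr b x2) (pr c x3) (pr d x4) (pr e x5).

Definition C3 (f : V -> V -> V -> V) : Prop :=
  trilinear f /\
  (forall x1 x2 x3 e1 e2 e3, homog e1 x1 -> homog e2 x2 -> homog e3 x3 ->
     f x2 x1 x3 = (- delta * sg (e1 && e2)) *: f x1 x2 x3) /\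
  (forall x1 x2 x3 e1 e2 e3, homog e1 x1 -> homog e2 x2 -> homog e3 x3 ->
     sg (e1 && e3) *: f x1 x2 x3 + sg (e2 && e1) *: f x2 x3 x1
     + sg (e3 && e2) *: f x3 x1 x2 = 0).

Definition Z3 (f : V -> V -> V -> V) : Prop :=
  C3 f /\ forall x1 x2 x3 x4 x5, d3 f x1 x2 x3 x4 x5 = 0.
Definition B3 (f : V -> V -> V -> V) : Prop :=
  exists g : V -> V, linear1 g /\ forall x1 x2 x3, f x1 x2 x3 = d1 g x1 x2 x3.

Definition H3_zero : Prop := forall f, Z3 f -> B3 f.
End Cohomology.

End JLSTS.

(* Main.v *)
Require Import Defs.
From mathcomp Require Import all_boot all_order all_algebra.
From mathcomp Require Import ring zify.
From Stdlib Require Import FunctionalExtensionality ClassicalEpsilon Classical.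
Set Implicit Arguments. Unset Strict Implicit. Unset Printing Implicit Defensive.
Import GRing.Theory.
Local Open Scope ring_scope.

Section Conv.
Variable W : zmodType.

Definition conv n (F : nat -> nat -> W) : W := \sum_(0 <= i < n.+1) F i (n - i)%N.

Lemma conv_eq n F G : (forall i, (i <= n)%N -> F i (n - i)%N = G i (n - i)%N) ->
  conv n F = conv n G.
Proof.
move=> H; rewrite /conv big_nat_cond [RHS]big_nat_cond.
by apply: eq_bigr => i /andP[/andP[_ Hi] _]; apply: H.
Qed.

Lemma conv_ext n F G : (forall i j, F i j = G i j) -> conv n F = conv n G.
Proof. by move=> H; apply: conv_eq => i _; apply: H. Qed.

Lemma conv_add n F G : conv n (fun i j => F i j + G i j) = conv n F + conv n G.
Proof. by rewrite /conv big_split. Qed.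

Lemma conv0 n : conv n (fun _ _ => 0) = 0.
Proof. by rewrite /conv big1. Qed.

Lemma conv_C n F : conv n F = conv n (fun i j => F j i).
Proof.
rewrite /conv big_nat_rev /=; apply: eq_big_nat => i /andP[_ Hi].
rewrite add0n subSS; congr F; rewrite subKn //.
Qed.

Lemma conv_A n (F : nat -> nat -> nat -> W) :
  conv n (fun p l => conv p (fun i j => F i j l)) =
  conv n (fun i q => conv q (fun j l => F i j l)).
Proof.
rewrite /conv.
transitivity (\sum_(0 <= p < n.+1) \sum_(0 <= i < n.+1 | (i <= p)%N) F i (p - i)%N (n - p)%N).
  apply: eq_big_nat => p /andP[_ Hp].
  by rewrite (big_nat_widen 0 p.+1 n.+1).
rewrite (exchange_big_dep_nat predT) //=.
apply: eq_big_nat => i /andP[_ Hi].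
rewrite [LHS](_ : _ = \sum_(i <= j < n.+1) F i (j - i)%N (n - j)%N); last first.
  by rewrite [RHS](big_nat_widenl _ 0).
rewrite -{1}(add0n i) big_addn subSn //.
by apply: eq_big_nat => j _; rewrite addnK addnC subnDA.
Qed.

Lemma conv_X n m (F : nat -> nat -> nat -> nat -> W) :
  conv n (fun a b => conv m (fun c d => F a b c d)) =
  conv m (fun c d => conv n (fun a b => F a b c d)).
Proof. by rewrite /conv exchange_big. Qed.

Lemma swap12 n (U : nat -> nat -> nat -> W) :
  conv n (fun b r => conv r (fun j s => U b j s)) =
  conv n (fun j r => conv r (fun b s => U b j s)).
Proof.
rewrite -conv_A; under conv_ext => p s do rewrite conv_C.
by rewrite conv_A.
Qed.

Lemma conv_l0 n F : (forall i j, (0 < i)%N -> F i j = 0) -> conv n F = F 0%N n.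
Proof.
move=> H; rewrite /conv big_nat_recl // big1 ?addr0 ?subn0 //.
by move=> i _; apply: H.
Qed.

Lemma conv_r0 n F : (forall i j, (0 < j)%N -> F i j = 0) -> conv n F = F n 0%N.
Proof. by move=> H; rewrite conv_C; apply: conv_l0 => i j /H. Qed.

Lemma conv_ends n F : (0 < n)%N ->
  (forall i j, (0 < i < n)%N -> F i j = 0) -> conv n F = F 0%N n + F n 0%N.
Proof.
case: n => // n _ H; rewrite /conv big_nat_recl // big_nat_recr //= subn0 subnn.
rewrite big1_seq ?add0r // => i; rewrite mem_index_iota => /andP[_ Hi].
by apply: H.
Qed.

Lemma conv_last n F : (forall i j, (i < n)%N -> F i j = 0) -> conv n F = F n 0%N.
Proof.
move=> H; rewrite /conv big_nat_recr //= subnn big1_seq ?add0r // => i.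
by rewrite mem_index_iota => /andP[_ Hi]; apply: H.
Qed.

Lemma pert n (F F' : nat -> nat -> W) d1 d2 : (0 < n)%N ->
  (forall i, (0 < i < n)%N -> F' i (n - i)%N = F i (n - i)%N) ->
  F' n 0%N = F n 0%N + d1 -> F' 0%N n = F 0%N n + d2 ->
  conv n F' = conv n F + d1 + d2.
Proof.
case: n => // n _ Hm H1 H2; rewrite /conv big_nat_recl // big_nat_recr //=.
rewrite [in RHS]big_nat_recl // [in RHS]big_nat_recr //= !subn0 !subnn H1 H2.
have -> : \sum_(0 <= i < n) F' i.+1 (n.+1 - i.+1)%N = \sum_(0 <= i < n) F i.+1 (n.+1 - i.+1)%N.
  by apply: eq_big_nat => i /andP[_ Hi]; apply: Hm => /=.
by rewrite -!addrA; congr (_ + _); rewrite addrC -!addrA.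
Qed.

End Conv.

Section Base.
Variables (K : fieldType) (T0 T1 : lmodType K).
Local Notation V := (T0 * T1)%type.
Local Notation lin := (@linear1 K T0 T1).

Lemma pick1 n a (G : nat -> V) :
  \sum_(j < n.+1 | (a + j == n)%N) G j = if (a <= n)%N then G (n - a)%N else 0.
Proof.
rewrite -(big_mkord (fun j => a + j == n)%N G).
case: leqP => Ha.
  rewrite (eq_bigl (fun j => j == (n - a)%N)) ?big_nat1_eq.
    by rewrite leq0n /= ltnS leq_subr.
  by move=> j /=; rewrite -[RHS](eqn_add2l a) subnKC.
rewrite big1 // => j /eqP Hj; move: Ha; rewrite -Hj ltnNge leq_addr.
done.
Qed.

Lemma cut n a (G : nat -> V) :
  \sum_(k < n.+1) (if (a + k <= n)%N then G k else 0) =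
  if (a <= n)%N then \sum_(0 <= k < (n - a).+1) G k else 0.
Proof.
case: leqP => Ha.
  rewrite (big_nat_widen 0 _ n.+1) ?ltnS ?leq_subr // big_mkord [RHS]big_mkcond.
  by apply: eq_bigr => k _; rewrite /= ltnS leq_subRL.
rewrite big1 // => k _; case: ifP => // H; move: Ha.
by rewrite ltnNge (leq_trans (leq_addr _ _) H).
Qed.

Lemma ext1_conv (phi : nat -> V -> V) x n :
  ext1 phi x n = conv n (fun i j => phi i (x j)).
Proof.
rewrite /ext1 /conv -(big_mkord xpredT (fun i => \sum_(j < n.+1 | (i + j)%N == n) phi i (x j))).
apply: eq_big_nat => i /andP[_ Hi].
by rewrite (pick1 n i (fun j => phi i (x j))) -ltnS Hi.
Qed.

Lemma ext3_conv (f : nat -> V -> V -> V -> V) x y z n :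
  ext3 f x y z n = conv n (fun i r => conv r (fun j s => conv s (fun k l =>
     f i (x j) (y k) (z l)))).
Proof.
rewrite /ext3 /conv -(big_mkord xpredT (fun i => \sum_(j < n.+1) \sum_(k < n.+1)
  \sum_(l < n.+1 | (i + j + k + l)%N == n) f i (x j) (y k) (z l))).
apply: eq_big_nat => i /andP[_ Hi].
transitivity (\sum_(j < n.+1) if (i + j <= n)%N then
   \sum_(0 <= k < (n - (i + j)).+1) f i (x j) (y k) (z (n - (i + j + k)))%N else 0).
  apply: eq_bigr => j _.
  rewrite -cut; apply: eq_bigr => k _.
  by rewrite (pick1 n (i + j + k) (fun l => f i (x j) (y k) (z l))).
rewrite (cut n i (fun j => \sum_(0 <= k < (n - (i + j)).+1) f i (x j) (y k) (z (n - (i + j + k))%N))).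
rewrite -ltnS Hi; apply: eq_big_nat => j /andP[_ Hj].
rewrite !subnDA; apply: eq_big_nat => k _.
by rewrite !subnDA.
Qed.

Lemma lin0 g : lin g -> g 0 = 0.
Proof.
move=> H; have E := H 1 0 0; rewrite !scale1r addr0 in E.
by apply: (addrI (g 0)); rewrite addr0 -E.
Qed.

Lemma linD g : lin g -> forall x y, g (x + y) = g x + g y.
Proof. by move=> H x y; have := H 1 x y; rewrite !scale1r. Qed.

Lemma linZ g : lin g -> forall k x, g (k *: x) = k *: g x.
Proof. by move=> H k x; have := H k x 0; rewrite (lin0 H) !addr0. Qed.

Lemma linN g : lin g -> forall x, g (- x) = - g x.
Proof. by move=> H x; rewrite -scaleN1r linZ // scaleN1r. Qed.

Lemma linB g : lin g -> forall x y, g (x - y) = g x - g y.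
Proof. by move=> H x y; rewrite linD // linN. Qed.

Lemma lin_sum g : lin g -> forall (I : Type) (r : seq I) (P : pred I) (F : I -> V),
  g (\sum_(i <- r | P i) F i) = \sum_(i <- r | P i) g (F i).
Proof.
move=> H I r P F; elim/big_rec2: _ => [|i y1 y2 _ <-]; first exact: lin0.
exact: linD.
Qed.

Lemma lin_conv g : lin g -> forall n F, g (conv n F) = conv n (fun i j => g (F i j)).
Proof. by move=> H n F; rewrite /conv lin_sum. Qed.

Lemma lin_id : lin id. Proof. by []. Qed.
Lemma lin_comp g h : lin g -> lin h -> lin (fun x => g (h x)).
Proof. by move=> Hg Hh k x y; rewrite Hh Hg. Qed.

Lemma tri1 f : trilinear f -> forall b c, lin (fun x => f x b c).
Proof. by case=> H _ b c k x y; apply: H. Qed.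
Lemma tri2 f : trilinear f -> forall a c, lin (fun x => f a x c).
Proof. by case=> _ [H _] a c k x y; apply: H. Qed.
Lemma tri3 f : trilinear f -> forall a b, lin (fun x => f a b x).
Proof. by case=> _ [_ H] a b k x y; apply: H. Qed.

Lemma tri1_conv (f : V -> V -> V -> V) : trilinear f -> forall n G b c,
  f (conv n G) b c = conv n (fun i j => f (G i j) b c).
Proof. by move=> H n G b c; rewrite (lin_conv (tri1 H b c)). Qed.
Lemma tri2_conv (f : V -> V -> V -> V) : trilinear f -> forall n G a c,
  f a (conv n G) c = conv n (fun i j => f a (G i j) c).
Proof. by move=> H n G a c; rewrite (lin_conv (tri2 H a c)). Qed.
Lemma tri3_conv (f : V -> V -> V -> V) : trilinear f -> forall n G a b,
  f a b (conv n G) = conv n (fun i j => f a b (G i j)).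
Proof. by move=> H n G a b; rewrite (lin_conv (tri3 H a b)). Qed.

End Base.

Section Transport.
Variables (K : fieldType) (T0 T1 : lmodType K).
Local Notation V := (T0 * T1)%type.
Local Notation lin := (@linear1 K T0 T1).
Local Notation ser := (@ser K T0 T1).

Definition lact (P : nat -> V -> V) (F : nat -> V -> V -> V -> V) : nat -> V -> V -> V -> V :=
  fun m x y z => conv m (fun i j => P i (F j x y z)).
Definition ract1 (F : nat -> V -> V -> V -> V) (Q : nat -> V -> V) : nat -> V -> V -> V -> V :=
  fun m x y z => conv m (fun j a => F j (Q a x) y z).
Definition ract2 (F : nat -> V -> V -> V -> V) (Q : nat -> V -> V) : nat -> V -> V -> V -> V :=
  fun m x y z => conv m (fun j a => F j x (Q a y) z).
Definition ract3 (F : nat -> V -> V -> V -> V) (Q : nat -> V -> V) : nat -> V -> V -> V -> V :=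
  fun m x y z => conv m (fun j a => F j x y (Q a z)).

Lemma L_l P F (X Y Z : ser) n : (forall i, lin (P i)) ->
  ext3 (lact P F) X Y Z n = ext1 P (ext3 F X Y Z) n.
Proof.
move=> HP.
have -> : ext1 P (ext3 F X Y Z) n = conv n (fun i q => conv q (fun j' r =>
    conv r (fun j s => conv s (fun k l => P i (F j' (X j) (Y k) (Z l)))))).
  rewrite ext1_conv; apply: conv_ext => i p; rewrite ext3_conv lin_conv //.
  apply: conv_ext => j' r; rewrite lin_conv //; apply: conv_ext => j s.
  by rewrite lin_conv.
rewrite ext3_conv /lact.
under conv_ext => m r do under conv_ext => j s do rewrite conv_X.
under conv_ext => m r do rewrite conv_X.
by rewrite conv_A.
Qed.

Lemma L_r1 F Q (X Y Z : ser) n : (forall j, trilinear (F j)) ->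
  ext3 (ract1 F Q) X Y Z n = ext3 F (ext1 Q X) Y Z n.
Proof.
move=> HF.
have -> : ext3 F (ext1 Q X) Y Z n = conv n (fun j' r => conv r (fun a q =>
    conv q (fun j s => conv s (fun k l => F j' (Q a (X j)) (Y k) (Z l))))).
  rewrite ext3_conv; apply: conv_ext => j' r.
  under conv_ext => p s do under conv_ext => k l do rewrite ext1_conv tri1_conv //.
  under conv_ext => p s do rewrite conv_X.
  by rewrite conv_A.
rewrite ext3_conv /ract1.
under conv_ext => m r do under conv_ext => j s do rewrite conv_X.
under conv_ext => m r do rewrite conv_X.
by rewrite conv_A.
Qed.

Lemma L_r2 F Q (X Y Z : ser) n : (forall j, trilinear (F j)) ->
  ext3 (ract2 F Q) X Y Z n = ext3 F X (ext1 Q Y) Z n.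
Proof.
move=> HF.
have -> : ext3 F X (ext1 Q Y) Z n = conv n (fun j' r => conv r (fun j s =>
    conv s (fun b q => conv q (fun k l => F j' (X j) (Q b (Y k)) (Z l))))).
  rewrite ext3_conv; apply: conv_ext => j' r; apply: conv_ext => j s.
  under conv_ext => p l do rewrite ext1_conv tri2_conv //.
  by rewrite conv_A.
rewrite ext3_conv /ract2.
under conv_ext => m r do under conv_ext => j s do rewrite conv_X.
under conv_ext => m r do rewrite conv_X.
rewrite conv_A; apply: conv_ext => j' q.
by rewrite swap12.
Qed.

Lemma L_r3 F Q (X Y Z : ser) n : (forall j, trilinear (F j)) ->
  ext3 (ract3 F Q) X Y Z n = ext3 F X Y (ext1 Q Z) n.
Proof.
move=> HF.
have -> : ext3 F X Y (ext1 Q Z) n = conv n (fun j' r => conv r (fun j s =>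
    conv s (fun k p => conv p (fun c l => F j' (X j) (Y k) (Q c (Z l)))))).
  rewrite ext3_conv; apply: conv_ext => j' r; apply: conv_ext => j s.
  by under conv_ext => k p do rewrite ext1_conv tri3_conv //.
rewrite ext3_conv /ract3.
under conv_ext => m r do under conv_ext => j s do rewrite conv_X.
under conv_ext => m r do rewrite conv_X.
rewrite conv_A; apply: conv_ext => j' q.
rewrite swap12; apply: conv_ext => j r.
by rewrite swap12.
Qed.

End Transport.

Section Inv.
Variables (K : fieldType) (T0 T1 : lmodType K).
Local Notation V := (T0 * T1)%type.
Local Notation lin := (@linear1 K T0 T1).
Local Notation ser := (@ser K T0 T1).
Local Notation hom := (@homog K T0 T1).

Lemma hom0 d : hom d 0. Proof. by case: d. Qed.
Lemma homD d x y : hom d x -> hom d y -> hom d (x + y).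
Proof. by case: d => /= -> ->; rewrite addr0. Qed.
Lemma homZ d k x : hom d x -> hom d (k *: x).
Proof. by case: d => /= ->; rewrite scaler0. Qed.
Lemma homN d x : hom d x -> hom d (- x).
Proof. by case: d => /= ->; rewrite oppr0. Qed.
Lemma homB d x y : hom d x -> hom d y -> hom d (x - y).
Proof. by move=> Hx Hy; apply: homD => //; apply: homN. Qed.
Lemma hom_sum d (I : Type) (r : seq I) (P : pred I) (F : I -> V) :
  (forall i, P i -> hom d (F i)) -> hom d (\sum_(i <- r | P i) F i).
Proof. by move=> H; elim/big_ind: _ => //; [exact: hom0 | exact: homD]. Qed.
Lemma hom_conv d n (F : nat -> nat -> V) : (forall i j, hom d (F i j)) -> hom d (conv n F).
Proof. by move=> H; apply: hom_sum => i _; apply: H. Qed.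
Lemma hom_eq d d' x : d = d' -> hom d x -> hom d' x.
Proof. by move=> ->. Qed.
Lemma hom_both d x : hom d x -> hom (~~ d) x -> x = 0.
Proof. by case: d x => [] [x1 x2] /= -> ->. Qed.

Definition even (g : V -> V) := forall d x, hom d x -> hom d (g x).

Lemma lin_sumf (I : eqType) (r : seq I) (P : pred I) (G : I -> V -> V) :
  (forall i, i \in r -> lin (G i)) -> lin (fun x => \sum_(i <- r | P i) G i x).
Proof.
move=> H k x y; rewrite scaler_sumr -big_split /= big_seq_cond [RHS]big_seq_cond.
by apply: eq_bigr => i /andP[Hi _]; apply: H.
Qed.
Lemma lin_opp g : lin g -> lin (fun x => - g x).
Proof. by move=> H k x y; rewrite H opprD scalerN. Qed.
Lemma even_sumf (I : eqType) (r : seq I) (P : pred I) (G : I -> V -> V) :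
  (forall i, even (G i)) -> even (fun x => \sum_(i <- r | P i) G i x).
Proof. by move=> H d x Hx; apply: hom_sum => i _; apply: H. Qed.
Lemma even_opp g : even g -> even (fun x => - g x).
Proof. by move=> H d x Hx; apply/homN/H. Qed.
Lemma even_comp g h : even g -> even h -> even (fun x => g (h x)).
Proof. by move=> Hg Hh d x Hx; apply/Hg/Hh. Qed.

Definition comp (P Q : nat -> V -> V) : nat -> V -> V :=
  fun q x => conv q (fun i j => P i (Q j x)).

Lemma L_comp P Q (X : ser) n : (forall i, lin (P i)) ->
  ext1 P (ext1 Q X) n = ext1 (comp P Q) X n.
Proof.
move=> HP; rewrite !ext1_conv /comp.
under conv_ext => i p do rewrite ext1_conv lin_conv //.
by rewrite -conv_A.
Qed.

Fixpoint psis (P : nat -> V -> V) (n : nat) : seq (V -> V) :=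
  match n with
  | 0 => [:: id]
  | m.+1 => let s := psis P m in
      rcons s (fun x => - \sum_(0 <= i < m.+1) (nth id s i) (P (m.+1 - i)%N x))
  end.
Definition linv P n := nth id (psis P n) n.

Lemma size_psis P n : size (psis P n) = n.+1.
Proof. by elim: n => //= n IH; rewrite size_rcons IH. Qed.

Lemma nth_psis P n i : (i <= n)%N -> nth id (psis P n) i = linv P i.
Proof.
elim: n => [|n IH]; first by rewrite leqn0 => /eqP ->.
rewrite leq_eqVlt => /orP[/eqP -> //|Hi].
by rewrite /= nth_rcons size_psis Hi IH.
Qed.

Lemma linv0 P : linv P 0 = id. Proof. by []. Qed.
Lemma linvS P m x : linv P m.+1 x =
  - \sum_(0 <= i < m.+1) linv P i (P (m.+1 - i)%N x).
Proof.
rewrite /linv /= nth_rcons size_psis ltnn eqxx /=; congr (- _).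
by apply: eq_big_nat => i /andP[_ Hi]; rewrite nth_psis.
Qed.

Lemma linv_lin P : (forall i, lin (P i)) -> forall n, lin (linv P n).
Proof.
move=> HP n; elim: n {-2}n (leqnn n) => [|n IH] m.
  by rewrite leqn0 => /eqP ->.
rewrite leq_eqVlt => /orP[/eqP ->|]; last by apply: IH.
move=> k x y; rewrite !linvS.
have H : lin (fun x => - \sum_(0 <= i < n.+1) linv P i (P (n.+1 - i)%N x)).
  apply: lin_opp; apply: lin_sumf => i; rewrite mem_index_iota => /andP[_ Hi].
  by apply: lin_comp; [apply: IH|apply: HP].
exact: H k x y.
Qed.

Lemma linv_even P : (forall i, even (P i)) -> forall n, even (linv P n).
Proof.
move=> HP n; elim: n {-2}n (leqnn n) => [|n IH] m.
  by rewrite leqn0 => /eqP ->.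
rewrite leq_eqVlt => /orP[/eqP ->|]; last by apply: IH.
move=> d x Hx; rewrite !linvS.
apply: homN; rewrite big_seq; apply: hom_sum => i; rewrite mem_index_iota => /andP[_ Hi].
by apply: IH => //; apply: HP.
Qed.

Lemma comp_linv P : P 0%N = id -> forall n x,
  comp (linv P) P n x = if n is 0 then x else 0.
Proof.
move=> H0 [|m] x; first by rewrite /comp /conv big_nat1 H0.
rewrite /comp /conv big_nat_recr //= subnn H0 linvS.
exact: subrr.
Qed.

Lemma L_inv P (X : ser) n : (forall i, lin (P i)) -> P 0%N = id ->
  ext1 (linv P) (ext1 P X) n = X n.
Proof.
move=> HP H0; rewrite L_comp; last exact: linv_lin.
rewrite ext1_conv conv_l0; last by move=> [|i] j // _; rewrite comp_linv.
by rewrite comp_linv.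
Qed.

End Inv.

Section Tri.
Variables (K : fieldType) (T0 T1 : lmodType K).
Local Notation V := (T0 * T1)%type.
Local Notation lin := (@linear1 K T0 T1).
Local Notation ser := (@ser K T0 T1).
Local Notation hom := (@homog K T0 T1).

Lemma conv_scale n k (F : nat -> nat -> V) : conv n (fun i j => k *: F i j) = k *: conv n F.
Proof. by rewrite /conv scaler_sumr. Qed.

Lemma conv_lin n k (F G : nat -> nat -> V) :
  conv n (fun i j => k *: F i j + G i j) = k *: conv n F + conv n G.
Proof. by rewrite conv_add conv_scale. Qed.

Lemma tri_conv m (G : nat -> nat -> V -> V -> V -> V) :
  (forall i j, trilinear (G i j)) ->
  trilinear (fun x y z => conv m (fun i j => G i j x y z)).
Proof.
move=> H; split; [|split] => k a b c d.
- by rewrite -conv_lin; apply: conv_ext => i j; case: (H i j).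
- by rewrite -conv_lin; apply: conv_ext => i j; case: (H i j) => _ [].
- by rewrite -conv_lin; apply: conv_ext => i j; case: (H i j) => _ [].
Qed.

Lemma tri_compose (F : V -> V -> V -> V) A B C : trilinear F -> lin A -> lin B -> lin C ->
  trilinear (fun x y z => F (A x) (B y) (C z)).
Proof.
move=> [H1 [H2 H3]] HA HB HC; split; [|split] => k a b c d /=.
- by rewrite HA H1.
- by rewrite HB H2.
- by rewrite HC H3.
Qed.

Lemma tri_post P (F : V -> V -> V -> V) : lin P -> trilinear F ->
  trilinear (fun x y z => P (F x y z)).
Proof.
move=> HP [H1 [H2 H3]]; split; [|split] => k a b c d /=.
- by rewrite H1 HP.
- by rewrite H2 HP.
- by rewrite H3 HP.
Qed.

Lemma ext1_sadd P (X Y : ser) : (forall i, lin (P i)) ->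
  ext1 P (sadd X Y) = sadd (ext1 P X) (ext1 P Y).
Proof.
move=> HP; apply: functional_extensionality => n.
rewrite /sadd !ext1_conv -conv_add; apply: conv_ext => i j.
exact: linD.
Qed.

Lemma ext1_sscl P k (X : ser) : (forall i, lin (P i)) ->
  ext1 P (sscl k X) = sscl k (ext1 P X).
Proof.
move=> HP; apply: functional_extensionality => n.
rewrite /sscl !ext1_conv -conv_scale; apply: conv_ext => i j.
exact: linZ.
Qed.

Lemma ext1_szero P : (forall i, lin (P i)) -> ext1 P (@szero K T0 T1) = @szero K T0 T1.
Proof.
move=> HP; apply: functional_extensionality => n.
rewrite /szero ext1_conv (@conv_ext _ n _ (fun _ _ => 0)) ?conv0 // => i j /=.
exact: lin0.
Qed.

Lemma ext1_shom P d (X : ser) : (forall i, even (P i)) -> shom d X -> shom d (ext1 P X).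
Proof.
move=> HP HX n; rewrite ext1_conv; apply: hom_conv => i j.
by apply: HP; apply: HX.
Qed.

End Tri.

Section TransportDef.
Variables (K : fieldType) (T0 T1 : lmodType K).
Local Notation V := (T0 * T1)%type.
Local Notation lin := (@linear1 K T0 T1).
Local Notation ser := (@ser K T0 T1).
Local Notation hom := (@homog K T0 T1).
Variables (delta : K) (br : V -> V -> V -> V) (f : nat -> V -> V -> V -> V).
Hypothesis Hf : deformation delta br f.
Variable P : nat -> V -> V.
Hypotheses (HP0 : P 0%N = id) (HPl : forall i, lin (P i)) (HPe : forall i, even (P i)).

Definition trh : nat -> V -> V -> V -> V :=
  lact P (ract3 (ract2 (ract1 f (linv P)) (linv P)) (linv P)).

Let Hft : forall i, trilinear (f i). Proof. by case: Hf. Qed.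
Let HQl : forall i, lin (linv P i). Proof. exact: linv_lin. Qed.
Let HQe : forall i, even (linv P i). Proof. exact: linv_even. Qed.

Let tri_r1 : forall m, trilinear (ract1 f (linv P) m).
Proof. by move=> m; apply: tri_conv => j a; apply: tri_compose. Qed.
Let tri_r2 : forall m, trilinear (ract2 (ract1 f (linv P)) (linv P) m).
Proof. by move=> m; apply: tri_conv => j a; apply: tri_compose. Qed.
Let tri_r3 : forall m, trilinear (ract3 (ract2 (ract1 f (linv P)) (linv P)) (linv P) m).
Proof. by move=> m; apply: tri_conv => j a; apply: tri_compose. Qed.

Lemma trh_tri m : trilinear (trh m).
Proof. by apply: tri_conv => i j; apply: tri_post. Qed.

Lemma trh_ext (X Y Z : ser) :
  ext3 trh X Y Z = ext1 P (ext3 f (ext1 (linv P) X) (ext1 (linv P) Y) (ext1 (linv P) Z)).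
Proof.
apply: functional_extensionality => n; rewrite /trh L_l //.
congr (ext1 P _ n); apply: functional_extensionality => p.
rewrite L_r3 // L_r2 // L_r1 //.
Qed.

Lemma inv_ser (X : ser) : ext1 (linv P) (ext1 P X) = X.
Proof. by apply: functional_extensionality => n; rewrite L_inv. Qed.

Lemma trh_rel (X Y Z : ser) :
  ext1 P (ext3 f X Y Z) = ext3 trh (ext1 P X) (ext1 P Y) (ext1 P Z).
Proof. by rewrite trh_ext !inv_ser. Qed.

Lemma trh_A1 : axA1 (@shom K T0 T1) (ext3 trh).
Proof.
move=> a b c da db dc Ha Hb Hc; rewrite trh_ext; apply: ext1_shom => //.
by case: Hf => _ [_ [H _]]; apply: H; apply: ext1_shom.
Qed.

Lemma trh_A2 : axA2 (@shom K T0 T1) (@sscl K T0 T1) delta (ext3 trh).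
Proof.
move=> a b c da db dc Ha Hb Hc; rewrite !trh_ext -ext1_sscl //.
by case: Hf => _ [_ [_ [H _]]]; rewrite (H _ _ _ da db dc) //; apply: ext1_shom.
Qed.

Lemma trh_A3 : axA3 (@shom K T0 T1) (@sadd K T0 T1) (@sscl K T0 T1) (@szero K T0 T1) (ext3 trh).
Proof.
move=> a b c da db dc Ha Hb Hc; rewrite !trh_ext -!ext1_sscl // -!ext1_sadd //.
case: Hf => _ [_ [_ [_ [H _]]]]; rewrite (H _ _ _ da db dc) ?ext1_szero //.
all: by apply: ext1_shom.
Qed.

Lemma trh_A4 : axA4 (@shom K T0 T1) (@sadd K T0 T1) (@sscl K T0 T1) delta (ext3 trh).
Proof.
move=> a b c d e da db dc dd de Ha Hb Hc Hd He; rewrite !trh_ext !inv_ser.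
rewrite -!ext1_sscl // -!ext1_sadd //.
case: Hf => _ [_ [_ [_ [_ H]]]]; rewrite (H _ _ _ _ _ da db dc dd de) //.
all: by apply: ext1_shom.
Qed.

End TransportDef.

Section Extract.
Variables (K : fieldType) (T0 T1 : lmodType K).
Local Notation V := (T0 * T1)%type.
Local Notation lin := (@linear1 K T0 T1).
Local Notation ser := (@ser K T0 T1).
Local Notation hom := (@homog K T0 T1).

Definition cst (x : V) : ser := fun n => if n is 0 then x else 0.

Lemma tri0_1 (F : V -> V -> V -> V) b c : trilinear F -> F 0 b c = 0.
Proof. by move=> H; apply: (lin0 (tri1 H b c)). Qed.
Lemma tri0_2 (F : V -> V -> V -> V) a c : trilinear F -> F a 0 c = 0.
Proof. by move=> H; apply: (lin0 (tri2 H a c)). Qed.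
Lemma tri0_3 (F : V -> V -> V -> V) a b : trilinear F -> F a b 0 = 0.
Proof. by move=> H; apply: (lin0 (tri3 H a b)). Qed.

Lemma conv_zero (W : zmodType) n (F : nat -> nat -> W) : (forall i j, F i j = 0) -> conv n F = 0.
Proof. by move=> H; rewrite /conv big1 // => i _; apply: H. Qed.

Lemma conv_at0 (W : zmodType) (F : nat -> nat -> W) : conv 0 F = F 0%N 0%N.
Proof. by rewrite /conv big_nat1. Qed.

Variable F : nat -> V -> V -> V -> V.
Hypothesis HF : forall i, trilinear (F i).

Lemma ext3_c12 x y (Z : ser) n : ext3 F (cst x) (cst y) Z n = conv n (fun i r => F i x y (Z r)).
Proof.
rewrite ext3_conv; apply: conv_ext => i r.
rewrite conv_l0; last first.
  by move=> [|j] s // _; apply: conv_zero => k l; apply: tri0_1.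
rewrite conv_l0 // => -[|k] l // _; exact: tri0_2.
Qed.

Lemma ext3_c13 x (Y : ser) z n : ext3 F (cst x) Y (cst z) n = conv n (fun i r => F i x (Y r) z).
Proof.
rewrite ext3_conv; apply: conv_ext => i r.
rewrite conv_l0; last first.
  by move=> [|j] s // _; apply: conv_zero => k l; apply: tri0_1.
rewrite conv_r0 // => k [|l] // _; exact: tri0_3.
Qed.

Lemma ext3_c23 (X : ser) y z n : ext3 F X (cst y) (cst z) n = conv n (fun i r => F i (X r) y z).
Proof.
rewrite ext3_conv; apply: conv_ext => i r.
transitivity (conv r (fun j s => F i (X j) (cst y s) z)).
  by apply: conv_ext => j s; rewrite conv_r0 // => k [|l] // _; exact: tri0_3.
rewrite conv_r0 // => j [|s] // _; exact: tri0_2.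
Qed.

Lemma ext3_cst x y z n : ext3 F (cst x) (cst y) (cst z) n = F n x y z.
Proof.
rewrite ext3_c12 conv_r0 // => i [|r] // _; exact: tri0_3.
Qed.

End Extract.

Section Step.
Variables (K : fieldType) (T0 T1 : lmodType K).
Local Notation V := (T0 * T1)%type.
Local Notation lin := (@linear1 K T0 T1).
Local Notation ser := (@ser K T0 T1).
Variables (delta : K) (br : V -> V -> V -> V) (f : nat -> V -> V -> V -> V).
Hypothesis Hf : deformation delta br f.
Variable P : nat -> V -> V.
Hypotheses (HP0 : P 0%N = id) (HPl : forall i, lin (P i)) (HPe : forall i, even (P i)).

Definition Delta m x y z : V :=
  conv m (fun i j => P i (f j x y z)) -
  conv m (fun a r => conv r (fun b c => br (P a x) (P b y) (P c z))).

Lemma ext1_cst x a : ext1 P (cst x) a = P a x.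
Proof. by rewrite ext1_conv conv_r0 // => i [|j] // _; exact: lin0. Qed.

Lemma trh_step m : (forall m', (m' < m)%N -> forall x y z,
    trh f P m' x y z = null_def br m' x y z) ->
  forall x y z, trh f P m x y z = null_def br m x y z + Delta m x y z.
Proof.
move=> Hm x y z.
have Hft : forall i, trilinear (f i) by case: Hf.
have R := congr1 (fun s => s m) (trh_rel Hf HP0 HPl (cst x) (cst y) (cst z)).
have E : forall x, ext1 P (cst x) = fun a => P a x.
  by move=> u; apply: functional_extensionality => a; rewrite ext1_cst.
move: R; rewrite /= ext1_conv !E ext3_conv.
under conv_ext => i j do rewrite ext3_cst //.
set tr := trh f P.
under [in RHS]conv_ext => i r do under conv_ext => a s do under conv_ext => b c do
  rewrite -[tr i _ _ _](subrK (null_def br i (P a x) (P b y) (P c z))).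
under [in RHS]conv_ext => i r do under conv_ext => a s do rewrite conv_add.
under [in RHS]conv_ext => i r do rewrite conv_add.
rewrite [in RHS]conv_add.
rewrite [X in _ = X + _]conv_last; last first.
  move=> i r Hi; apply: conv_zero => a s; apply: conv_zero => b c.
  by rewrite /tr Hm // subrr.
rewrite [X in _ = _ + X]conv_l0; last first.
  by move=> [|i] r // _; apply: conv_zero => a s; apply: conv_zero.
rewrite !conv_at0 HP0 /= => R.
rewrite /Delta R addrK.
by rewrite addrC subrK.
Qed.

End Step.

Section PrLemmas.
Variables (K : fieldType) (T0 T1 : lmodType K).
Local Notation V := (T0 * T1)%type.
Local Notation lin := (@linear1 K T0 T1).
Local Notation ser := (@ser K T0 T1).
Local Notation hom := (@homog K T0 T1).

Lemma pr_lin d : lin (@pr K T0 T1 d).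
Proof.
by case: d => k [x1 x2] [y1 y2]; apply: injective_projections => /=;
  rewrite ?scaler0 ?addr0.
Qed.

Lemma pr_hom d (x : V) : hom d (pr d x).
Proof. by case: d. Qed.

Lemma pr_id d (x : V) : hom d x -> pr d x = x.
Proof. by case: d x => [] [x1 x2] /= ->. Qed.

Lemma pr_0 d (x : V) : hom d x -> pr (~~ d) x = 0.
Proof. by case: d x => [] [x1 x2] /= ->. Qed.

Lemma pr_split (x : V) : pr false x + pr true x = x.
Proof. by case: x => x1 x2; apply: injective_projections => /=; rewrite ?addr0 ?add0r. Qed.

Lemma sum_bool (W : zmodType) (G : bool -> W) : \sum_(b : bool) G b = G true + G false.
Proof. by rewrite big_bool. Qed.

Lemma sg_ok (d d' : bool) : d = d' -> hom d = hom d'. Proof. by move=> ->. Qed.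

Variable F : V -> V -> V -> V.
Hypothesis HFt : trilinear F.
Hypothesis HFe : forall a b c x y z, hom a x -> hom b y -> hom c z -> hom (a (+) b (+) c) (F x y z).

Lemma comp3_even p u v w : comp3 p F u v w = if p then 0 else F u v w.
Proof.
rewrite /comp3.
have -> : \sum_(a : bool) \sum_(b : bool) \sum_(c : bool)
    pr (a (+) b (+) c (+) p) (F (pr a u) (pr b v) (pr c w)) =
    \sum_(a : bool) \sum_(b : bool) \sum_(c : bool)
    (if p then 0 else F (pr a u) (pr b v) (pr c w)).
  apply: eq_bigr => a _; apply: eq_bigr => b _; apply: eq_bigr => c _.
  have H := HFe (pr_hom a u) (pr_hom b v) (pr_hom c w).
  by case: p; [rewrite addbT pr_0 | rewrite addbF pr_id].
case: p.
  by rewrite big1 // => a _; rewrite big1 // => b _; rewrite big1.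
rewrite !sum_bool.
rewrite -!(linD (tri3 HFt _ _)) !(addrC (pr true _)) !pr_split.
rewrite -!(linD (tri2 HFt _ _)) !(addrC (pr true _)) !pr_split.
by rewrite -!(linD (tri1 HFt _ _)) !(addrC (pr true _)) !pr_split.
Qed.

End PrLemmas.

Section Comp1.
Variables (K : fieldType) (T0 T1 : lmodType K).
Local Notation V := (T0 * T1)%type.
Local Notation lin := (@linear1 K T0 T1).
Local Notation hom := (@homog K T0 T1).

Lemma comp1_hom (g : V -> V) p d x : lin g -> hom d x -> comp1 p g x = pr (d (+) p) (g x).
Proof.
move=> Hg Hx; rewrite /comp1 sum_bool.
case: d Hx => Hx.
  by rewrite (pr_id Hx) (pr_0 Hx) (lin0 Hg) (lin0 (pr_lin _)) addr0.
by rewrite (pr_id Hx) (pr_0 Hx) (lin0 Hg) (lin0 (pr_lin _)) add0r.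
Qed.

Lemma comp1_lin (g : V -> V) p : lin g -> lin (comp1 p g).
Proof.
move=> Hg k x y; rewrite /comp1 scaler_sumr -big_split; apply: eq_bigr => d _ /=.
by rewrite (pr_lin d) Hg (pr_lin _).
Qed.

Lemma comp1_even (g : V -> V) : lin g -> even (comp1 false g).
Proof. by move=> Hg d x Hx; rewrite (comp1_hom false Hg Hx) addbF; apply: pr_hom. Qed.

Lemma comp1_homp (g : V -> V) p d x : lin g -> hom d x -> hom (d (+) p) (comp1 p g x).
Proof. by move=> Hg Hx; rewrite (comp1_hom p Hg Hx); apply: pr_hom. Qed.

End Comp1.

Lemma ac8 (K : fieldType) (W : lmodType K) (R1 R2 R3 R4 R5 R6 L1 L2 : W) (s s' : K) :
  L1 + L2 = R2 + R1 + s *: (R4 + R3) + s' *: (R6 + R5) ->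
  R2 - - (s *: R4) - L1 + s' *: R6 + R1 - L2 + s *: R3 + s' *: R5 = 0.
Proof.
move=> H; rewrite !scalerDr in H; rewrite opprK.
pose F := nth 0 [:: R1; R2; s *: R3; s *: R4; s' *: R5; s' *: R6; - L1; - L2].
have E1 : R2 + s *: R4 - L1 + s' *: R6 + R1 - L2 + s *: R3 + s' *: R5 =
   \sum_(i <- [:: 1; 3; 6; 5; 0; 7; 2; 4]%N) F i.
  by rewrite !big_cons big_nil /= !addrA addr0.
have E2 : (R2 + R1 + (s *: R4 + s *: R3) + (s' *: R6 + s' *: R5)) + (- L1 + - L2) =
   \sum_(i <- [:: 1; 0; 3; 2; 5; 4; 6; 7]%N) F i.
  by rewrite !big_cons big_nil /= !addrA addr0.
rewrite E1 (perm_big [:: 1; 0; 3; 2; 5; 4; 6; 7]%N) // -E2 -opprD H.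
by rewrite subrr.
Qed.

Section Sg.
Variable K : fieldType.
Local Notation sgk := (@sg K).
Lemma sc1 s : sgk s * sgk s = 1.
Proof. by case: s; rewrite /sg /=; ring. Qed.
Lemma sc2 (dl : K) a b c d e : dl = 1 \/ dl = -1 ->
  dl * sgk ((a (+) b) && (c (+) e) (+) d && e) * sgk ((a (+) b (+) d) && (c (+) e))
  * (- dl * sgk (c && (a (+) b (+) d))) = - sgk (c && (a (+) b)).
Proof. by case=> ->; case: a; case: b; case: c; case: d; case: e; rewrite /sg /=; ring. Qed.
Lemma sc3 (dl : K) : dl = 1 \/ dl = -1 -> dl * 1 * dl = 1.
Proof. by case=> ->; ring. Qed.
End Sg.

Section TriExt.
Variables (K : fieldType) (T0 T1 : lmodType K).
Local Notation V := (T0 * T1)%type.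
Local Notation lin := (@linear1 K T0 T1).
Local Notation hom := (@homog K T0 T1).

Lemma lin_ext (A B : V -> V) : lin A -> lin B -> (forall d x, hom d x -> A x = B x) ->
  forall x, A x = B x.
Proof.
move=> HA HB H x; rewrite -(pr_split x) (linD HA) (linD HB).
by rewrite !(H _ _ (pr_hom _ _)).
Qed.

Lemma tri_ext (F G : V -> V -> V -> V) : trilinear F -> trilinear G ->
  (forall a b c x y z, hom a x -> hom b y -> hom c z -> F x y z = G x y z) ->
  forall x y z, F x y z = G x y z.
Proof.
move=> HF HG H x y z.
apply: (lin_ext (tri1 HF y z) (tri1 HG y z)) => a x' Hx'.
apply: (lin_ext (tri2 HF x' z) (tri2 HG x' z)) => b y' Hy'.
apply: (lin_ext (tri3 HF x' y') (tri3 HG x' y')) => c z' Hz'.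
exact: H Hx' Hy' Hz'.
Qed.

Lemma tri_add (F G : V -> V -> V -> V) : trilinear F -> trilinear G ->
  trilinear (fun x y z => F x y z + G x y z).
Proof.
move=> [F1 [F2 F3]] [G1 [G2 G3]]; split; [|split] => k a b c d /=.
- by rewrite F1 G1 scalerDr addrACA.
- by rewrite F2 G2 scalerDr addrACA.
- by rewrite F3 G3 scalerDr addrACA.
Qed.

Lemma tri_opp (F : V -> V -> V -> V) : trilinear F -> trilinear (fun x y z => - F x y z).
Proof.
move=> [F1 [F2 F3]]; split; [|split] => k a b c d /=.
- by rewrite F1 opprD scalerN.
- by rewrite F2 opprD scalerN.
- by rewrite F3 opprD scalerN.
Qed.

End TriExt.

Definition Sop (K : fieldType) (T0 T1 : lmodType K) (br : T0 * T1 -> T0 * T1 -> T0 * T1 -> T0 * T1)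
  (g : T0 * T1 -> T0 * T1) x y z :=
  br (g x) y z + br x (g y) z + br x y (g z) - g (br x y z).

Lemma bA a b c p : (a (+) p) (+) b (+) c = a (+) b (+) c (+) p.
Proof. by case: a; case: b; case: c; case: p. Qed.
Lemma bB a b c p : a (+) b (+) (c (+) p) = a (+) b (+) c (+) p.
Proof. by case: a; case: b; case: c; case: p. Qed.
Lemma bC a b c p : (b (+) p) (+) a (+) c = a (+) b (+) c (+) p.
Proof. by case: a; case: b; case: c; case: p. Qed.
Lemma bD a b c : ~~ (a (+) b (+) c (+) true) = a (+) b (+) c (+) false.
Proof. by case: a; case: b; case: c. Qed.
Lemma sc5 (K : fieldType) (dl : K) a b c : dl = 1 \/ dl = -1 ->
  (dl * sg K (b && c (+) false)) * sg K (b && (a (+) c)) * (- dl * sg K (a && b)) = -1.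
Proof. by case=> ->; case: a; case: b; case: c; rewrite /sg /=; ring. Qed.

Section Coc.
Variables (K : fieldType) (T0 T1 : lmodType K).
Local Notation V := (T0 * T1)%type.
Local Notation lin := (@linear1 K T0 T1).
Local Notation ser := (@ser K T0 T1).
Local Notation hom := (@homog K T0 T1).
Local Notation sgk := (@sg K).
Variables (delta : K) (br : V -> V -> V -> V).
Hypothesis HJ : JLSTS delta br.
Hypothesis Hd : delta = 1 \/ delta = -1.
Variables (h : nat -> V -> V -> V -> V) (n : nat).
Hypothesis Hht : forall m, trilinear (h m).
Hypothesis HA1 : axA1 (@shom K T0 T1) (ext3 h).
Hypothesis HA2 : axA2 (@shom K T0 T1) (@sscl K T0 T1) delta (ext3 h).
Hypothesis HA3 : axA3 (@shom K T0 T1) (@sadd K T0 T1) (@sscl K T0 T1) (@szero K T0 T1) (ext3 h).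
Hypothesis HA4 : axA4 (@shom K T0 T1) (@sadd K T0 T1) (@sscl K T0 T1) delta (ext3 h).
Hypothesis Hn : (0 < n)%N.
Hypothesis Hlow : forall m, (m < n)%N -> forall x y z, h m x y z = null_def br m x y z.

Let Hbt : trilinear br. Proof. by case: HJ. Qed.
Let Hb1 : axA1 hom br. Proof. by case: HJ => _ []. Qed.
Let Hb2 : axA2 hom (fun k x => k *: x) delta br. Proof. by case: HJ => _ [_ []]. Qed.

Local Notation Fn := (h n).

Lemma shom_cst d x : hom d x -> shom d (cst x).
Proof. by move=> Hx [|k] //=; apply: hom0. Qed.

Lemma h0 x y z : h 0 x y z = br x y z.
Proof. by rewrite Hlow. Qed.

Lemma hmid i x y z : (0 < i < n)%N -> h i x y z = 0.
Proof. by case: i => // i /andP[_ Hi]; rewrite Hlow. Qed.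

Lemma Fn_even a b c x y z : hom a x -> hom b y -> hom c z -> hom (a (+) b (+) c) (Fn x y z).
Proof.
move=> Hx Hy Hz.
have := HA1 (shom_cst Hx) (shom_cst Hy) (shom_cst Hz) n.
by rewrite ext3_cst.
Qed.

Lemma Fn_A2 a b c x y z : hom a x -> hom b y -> hom c z ->
  Fn y x z = (- delta * sgk (a && b)) *: Fn x y z.
Proof.
move=> Hx Hy Hz.
have := congr1 (fun s => s n) (HA2 (shom_cst Hx) (shom_cst Hy) (shom_cst Hz)).
by rewrite /sscl /= !ext3_cst.
Qed.

Lemma Fn_A3 a b c x y z : hom a x -> hom b y -> hom c z ->
  sgk (a && c) *: Fn x y z + sgk (b && a) *: Fn y z x + sgk (c && b) *: Fn z x y = 0.
Proof.
move=> Hx Hy Hz.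
have := congr1 (fun s => s n) (HA3 (shom_cst Hx) (shom_cst Hy) (shom_cst Hz)).
by rewrite /sscl /sadd /szero /= !ext3_cst.
Qed.

Lemma Fn_A4 a b c d e x1 x2 x3 x4 x5 :
  hom a x1 -> hom b x2 -> hom c x3 -> hom d x4 -> hom e x5 ->
  br x1 x2 (Fn x3 x4 x5) + Fn x1 x2 (br x3 x4 x5) =
  (br (Fn x1 x2 x3) x4 x5 + Fn (br x1 x2 x3) x4 x5)
  + sgk (c && (a (+) b)) *: (br x3 (Fn x1 x2 x4) x5 + Fn x3 (br x1 x2 x4) x5)
  + (delta * sgk ((a (+) b) && (c (+) d))) *: (br x3 x4 (Fn x1 x2 x5) + Fn x3 x4 (br x1 x2 x5)).
Proof.
move=> H1 H2 H3 H4 H5.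
have := congr1 (fun s => s n) (HA4 (shom_cst H1) (shom_cst H2) (shom_cst H3) (shom_cst H4) (shom_cst H5)).
rewrite /sscl /sadd /= !ext3_c12 // ext3_c23 // ext3_c13 //.
rewrite (conv_ends (F := fun i r => h i x1 x2 (ext3 h (cst x3) (cst x4) (cst x5) r)) Hn);
  last by move=> i j Hi; rewrite hmid.
rewrite (conv_ends (F := fun i r => h i (ext3 h (cst x1) (cst x2) (cst x3) r) x4 x5) Hn);
  last by move=> i j Hi; rewrite hmid.
rewrite (conv_ends (F := fun i r => h i x3 (ext3 h (cst x1) (cst x2) (cst x4) r) x5) Hn);
  last by move=> i j Hi; rewrite hmid.
rewrite (conv_ends (F := fun i r => h i x3 x4 (ext3 h (cst x1) (cst x2) (cst x5) r)) Hn);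
  last by move=> i j Hi; rewrite hmid.
by rewrite !ext3_cst // !h0 => ->.
Qed.

Lemma Fn_tri : trilinear Fn. Proof. exact: Hht. Qed.
Lemma Fn_ev : forall a b c x y z, hom a x -> hom b y -> hom c z -> hom (a (+) b (+) c) (Fn x y z).
Proof. by move=> *; apply: Fn_even. Qed.

Lemma delta_sg : exists s, delta = sgk s.
Proof. by case: Hd => ->; [exists false | exists true]. Qed.

Lemma Fn_d3h p a b c d e u1 u2 u3 u4 u5 :
  hom a u1 -> hom b u2 -> hom c u3 -> hom d u4 -> hom e u5 ->
  d3h delta br p (comp3 p Fn) a b c d e u1 u2 u3 u4 u5 = 0.
Proof.
move=> H1 H2 H3 H4 H5.
rewrite /d3h !(comp3_even Fn_tri Fn_ev).
case: p => /=.
  by rewrite /theta /Dop !(tri0_1 _ _ Hbt) !(tri0_3 _ _ Hbt) !scaler0 !subr0 !addr0.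
rewrite /theta /Dop (Hb2 H3 (Fn_even H1 H2 H4) H5) /= !scalerA sc1 scale1r sc3 // scale1r.
rewrite (sc2 _ _ _ _ _ Hd) (mulrC _ delta) scaleNr.
by apply: ac8; apply: (Fn_A4 H1 H2 H3 H4 H5).
Qed.

Lemma Fn_Z3 : Z3 delta br Fn.
Proof.
split.
  split; first exact: Fn_tri.
  split; first by move=> x1 x2 x3 e1 e2 e3 H1 H2 H3; apply: Fn_A2 H3.
  by move=> x1 x2 x3 e1 e2 e3 H1 H2 H3; apply: Fn_A3.
move=> x1 x2 x3 x4 x5; rewrite /d3.
apply: big1 => p _; apply: big1 => a _; apply: big1 => b _; apply: big1 => c _.
apply: big1 => d _; apply: big1 => e _.
by apply: Fn_d3h; apply: pr_hom.
Qed.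

Lemma Sop_tri g : lin g -> trilinear (Sop br g).
Proof.
move=> Hg; apply: tri_add; last by apply: tri_opp; apply: tri_post.
apply: tri_add; last by apply: tri_compose.
by apply: tri_add; apply: tri_compose.
Qed.

Section D1.
Variable G : V -> V.
Hypothesis HG : lin G.

Lemma d1h_z1 p a b c y z : d1h delta br p G a b c 0 y z = 0.
Proof.
rewrite /d1h /theta /Dop (lin0 HG) !(tri0_1 _ _ Hbt) (lin0 HG) !(tri0_2 _ _ Hbt).
by rewrite !scaler0 !subr0 addr0.
Qed.
Lemma d1h_z2 p a b c x z : d1h delta br p G a b c x 0 z = 0.
Proof.
rewrite /d1h /theta /Dop (lin0 HG) !(tri0_1 _ _ Hbt) !(tri0_2 _ _ Hbt) (lin0 HG).
by rewrite !scaler0 !subr0 addr0.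
Qed.
Lemma d1h_z3 p a b c x y : d1h delta br p G a b c x y 0 = 0.
Proof.
rewrite /d1h /theta /Dop (lin0 HG) !(tri0_3 _ _ Hbt) (lin0 HG).
by rewrite !scaler0 !subr0 addr0.
Qed.
End D1.

Lemma pick_bool' (W : zmodType) (H : bool -> W) d : H (~~ d) = 0 ->
  \sum_(d' : bool) H d' = H d.
Proof. by rewrite sum_bool; case: d => ->; rewrite ?addr0 ?add0r. Qed.

Lemma pick_bool (F : bool -> V -> V) d u : hom d u -> (forall d', F d' 0 = 0) ->
  \sum_(d' : bool) F d' (pr d' u) = F d u.
Proof.
move=> Hu H0; rewrite sum_bool; case: d Hu => Hu.
  by rewrite (pr_id Hu) (pr_0 Hu) H0 addr0.
by rewrite (pr_id Hu) (pr_0 Hu) H0 add0r.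
Qed.

Lemma d1_hom g a b c u1 u2 u3 : lin g -> hom a u1 -> hom b u2 -> hom c u3 ->
  d1 delta br g u1 u2 u3 = d1h delta br true (comp1 true g) a b c u1 u2 u3
    + d1h delta br false (comp1 false g) a b c u1 u2 u3.
Proof.
move=> Hg H1 H2 H3; rewrite /d1 sum_bool; congr (_ + _).
all: rewrite (pick_bool' (d := a)); last by rewrite (pr_0 H1);
   apply: big1 => b' _; apply: big1 => c' _; apply: d1h_z1; apply: comp1_lin.
all: rewrite (pick_bool' (d := b)); last by rewrite (pr_0 H2);
   apply: big1 => c' _; apply: d1h_z2; apply: comp1_lin.
all: rewrite (pick_bool' (d := c)); last by rewrite (pr_0 H3);
   apply: d1h_z3; apply: comp1_lin.
all: by rewrite (pr_id H1) (pr_id H2) (pr_id H3).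
Qed.

Lemma d1h_hom g p a b c u1 u2 u3 : lin g -> hom a u1 -> hom b u2 -> hom c u3 ->
  hom (a (+) b (+) c (+) p) (d1h delta br p (comp1 p g) a b c u1 u2 u3).
Proof.
move=> Hg H1 H2 H3; rewrite /d1h /theta /Dop.
apply: homB; last exact/homZ/homZ/(hom_eq (bC a b c p) (Hb1 (comp1_homp p Hg H2) H1 H3)).
apply: homD; last exact/homZ/homZ/(hom_eq (bB a b c p) (Hb1 H1 H2 (comp1_homp p Hg H3))).
apply: homB; last exact: (comp1_homp p Hg (Hb1 H1 H2 H3)).
exact/homZ/homZ/(hom_eq (bA a b c p) (Hb1 (comp1_homp p Hg H1) H2 H3)).
Qed.

Lemma d1h_false_S g a b c u1 u2 u3 : lin g -> even g -> hom a u1 -> hom b u2 -> hom c u3 ->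
  d1h delta br false g a b c u1 u2 u3 = Sop br g u1 u2 u3.
Proof.
move=> Hg Hge H1 H2 H3; rewrite /d1h /theta /Dop /Sop /=.
rewrite (Hb2 H1 (Hge _ _ H2) H3) /= !scalerA sc1 scale1r sc3 // scale1r.
rewrite (sc5 _ _ _ Hd) scaleN1r opprK.
by rewrite addrAC [RHS]addrAC [X in _ = X + _]addrAC.
Qed.

Lemma Fn_cob : H3_zero delta br ->
  exists g0, lin g0 /\ even g0 /\ forall x y z, Fn x y z = Sop br g0 x y z.
Proof.
move=> H3; have [g [Hg Hfg]] := H3 Fn Fn_Z3.
exists (comp1 false g); split; first exact: comp1_lin.
split; first exact: comp1_even.
apply: tri_ext; [exact: Fn_tri | exact/Sop_tri/comp1_lin |].
move=> a b c x y z Hx Hy Hz.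
have E := d1_hom Hg Hx Hy Hz; rewrite Hfg E.
have D1 : d1h delta br true (comp1 true g) a b c x y z = 0.
  apply: (hom_both (d1h_hom true Hg Hx Hy Hz)).
  rewrite bD.
  have -> : d1h delta br true (comp1 true g) a b c x y z =
     Fn x y z - d1h delta br false (comp1 false g) a b c x y z by rewrite Hfg E addrK.
  apply: homB; last exact: d1h_hom.
  by rewrite addbF; apply: Fn_even.
rewrite D1 add0r d1h_false_S //; [exact: comp1_lin | exact: comp1_even].
Qed.

End Coc.

Lemma ac_final (W : zmodType) (a b g u v w : W) : a - b = u + v + w - g ->
  a + g + 0 - (b + u + (v + w)) = 0.
Proof.
move/eqP; rewrite subr_eq => /eqP ->.
apply/eqP; rewrite subr_eq0 addr0; apply/eqP.
by rewrite addrAC subrK addrC !addrA.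
Qed.

Section Build.
Variables (K : fieldType) (T0 T1 : lmodType K).
Local Notation V := (T0 * T1)%type.
Local Notation lin := (@linear1 K T0 T1).
Local Notation ser := (@ser K T0 T1).
Local Notation hom := (@homog K T0 T1).
Variables (delta : K) (br : V -> V -> V -> V).
Hypothesis HJ : JLSTS delta br.
Hypothesis Hd : delta = 1 \/ delta = -1.
Hypothesis H3 : H3_zero delta br.
Variable f : nat -> V -> V -> V -> V.
Hypothesis Hf : deformation delta br f.

Let Hbt : trilinear br. Proof. by case: HJ. Qed.
Let Hf0 : f 0%N = br. Proof. by case: Hf => _ []. Qed.

Definition Good (phi : nat -> V -> V) n :=
  phi 0%N = id /\ (forall i, lin (phi i)) /\ (forall i, even (phi i)) /\
  forall m, (m < n)%N -> forall x y z, Delta br f phi m x y z = 0.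

Definition trunc (phi : nat -> V -> V) n : nat -> V -> V :=
  fun i => if (i < n)%N then phi i else fun _ => 0.
Definition upd (phi : nat -> V -> V) n (G : V -> V) : nat -> V -> V :=
  fun i => if i == n then G else phi i.

Lemma Delta_eq phi psi m x y z : (forall i, (i <= m)%N -> phi i = psi i) ->
  Delta br f phi m x y z = Delta br f psi m x y z.
Proof.
move=> H; rewrite /Delta; congr (_ - _).
  by apply: conv_eq => i Hi; rewrite H.
apply: conv_eq => a Ha; rewrite H //; apply: conv_eq => b Hb.
by rewrite !H //; lia.
Qed.

Lemma lin_zero : lin (fun _ : V => 0). Proof. by move=> k x y; rewrite scaler0 addr0. Qed.
Lemma even_zero : even (fun _ : V => 0). Proof. by move=> d x _; apply: hom0. Qed.

Lemma step phi n : Good phi n -> (0 < n)%N ->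
  exists G, lin G /\ even G /\ Good (upd phi n G) n.+1.
Proof.
move=> [H0 [Hl [He HD]]] Hn.
pose P := trunc phi n.
have HP0 : P 0%N = id by rewrite /P /trunc Hn.
have HPl : forall i, lin (P i) by move=> i; rewrite /P /trunc; case: ifP => _; [apply: Hl | apply: lin_zero].
have HPe : forall i, even (P i) by move=> i; rewrite /P /trunc; case: ifP => _; [apply: He | apply: even_zero].
have DP : forall m, (m < n)%N -> forall x y z, Delta br f P m x y z = 0.
  move=> m Hm x y z; rewrite (@Delta_eq P phi) ?HD // => i Hi.
  by rewrite /P /trunc (leq_ltn_trans Hi Hm).
have Hlow : forall m, (m < n)%N -> forall x y z, trh f P m x y z = null_def br m x y z.
  elim/ltn_ind => m IH Hm x y z.
  rewrite (trh_step Hf HP0 HPl) ?DP ?addr0 // => m' Hm'.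
  by apply: IH => //; apply: ltn_trans Hm' Hm.
have [g0 [Hgl [Hge Hg]]] := Fn_cob HJ Hd (trh_tri Hf HPl) (trh_A1 Hf HPl HPe)
   (trh_A2 Hf HPl HPe) (trh_A3 Hf HPl HPe) (trh_A4 Hf HP0 HPl HPe) Hn Hlow H3.
have DPn : forall x y z, Delta br f P n x y z = Sop br g0 x y z.
  have Hnull : forall x y z, null_def br n x y z = 0 by move=> *; rewrite -(prednK Hn).
  by move=> x y z; rewrite -Hg (trh_step Hf HP0 HPl Hlow) Hnull add0r.
exists g0; split=> //; split=> //.
split; first by rewrite /upd; case: eqP => // E; move: Hn; rewrite -E.
split; first by move=> i; rewrite /upd; case: ifP.
split; first by move=> i; rewrite /upd; case: ifP.
move=> m; rewrite ltnS leq_eqVlt => /orP[/eqP ->|Hm] x y z; last first.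
  rewrite (@Delta_eq _ phi) ?HD // => i Hi.
  by rewrite /upd ifF //; apply/negbTE; rewrite neq_ltn (leq_ltn_trans Hi Hm).
rewrite /Delta.
set phi' := upd phi n g0.
have Hn' : n != 0%N by rewrite -lt0n.
have E0 : phi' 0%N = id by rewrite /phi' /upd eq_sym (negbTE Hn').
have En : phi' n = g0 by rewrite /phi' /upd eqxx.
have Ei : forall i, (i < n)%N -> phi' i = P i.
  by move=> i Hi; rewrite /phi' /upd /P /trunc Hi ifF //; apply/negbTE; rewrite neq_ltn Hi.
have Pn : P n = fun _ => 0 by rewrite /P /trunc ltnn.
have PA : conv n (fun i j => phi' i (f j x y z)) =
    conv n (fun i j => P i (f j x y z)) + g0 (br x y z) + 0.
  apply: pert => //.
  - by move=> i /andP[_ Hi]; rewrite Ei.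
  - by rewrite En Pn Hf0 add0r.
  - by rewrite E0 HP0 addr0.
have PB2 : conv n (fun b c => br (phi' 0%N x) (phi' b y) (phi' c z)) =
    conv n (fun b c => br (P 0%N x) (P b y) (P c z)) + br x (g0 y) z + br x y (g0 z).
  apply: pert => //.
  - by move=> i /andP[Hi0 Hi]; rewrite !Ei //; lia.
  - by rewrite En Pn E0 HP0 (tri0_2 _ _ Hbt) add0r.
  - by rewrite En Pn E0 HP0 (tri0_3 _ _ Hbt) add0r.
have PB : conv n (fun a r => conv r (fun b c => br (phi' a x) (phi' b y) (phi' c z))) =
    conv n (fun a r => conv r (fun b c => br (P a x) (P b y) (P c z)))
    + br (g0 x) y z + (br x (g0 y) z + br x y (g0 z)).
  apply: pert => //.
  - move=> a /andP[Ha0 Ha]; rewrite Ei //; apply: conv_eq => b Hb.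
    by rewrite !Ei //; lia.
  - by rewrite !conv_at0 En Pn E0 HP0 (tri0_1 _ _ Hbt) add0r.
  - by rewrite PB2 -addrA.
rewrite PA PB; apply: ac_final.
exact: (DPn x y z).
Qed.

Lemma step_ex phi n : exists G : V -> V,
  Good phi n -> (0 < n)%N -> lin G /\ even G /\ Good (upd phi n G) n.+1.
Proof.
case: (classic (Good phi n /\ (0 < n)%N)) => [[Hg Hn]|Hno].
  by have [G HG] := step Hg Hn; exists G.
by exists id => Hg Hn; exfalso; apply: Hno.
Qed.

Definition stepG phi n : V -> V :=
  proj1_sig (constructive_indefinite_description _ (step_ex phi n)).

Lemma stepG_spec phi n : Good phi n -> (0 < n)%N ->
  lin (stepG phi n) /\ even (stepG phi n) /\ Good (upd phi n (stepG phi n)) n.+1.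
Proof. exact: (proj2_sig (constructive_indefinite_description _ (step_ex phi n))). Qed.

Fixpoint approx k : nat -> V -> V :=
  match k with
  | 0 => fun i => if i == 0%N then id else fun _ => 0
  | k'.+1 => upd (approx k') k'.+1 (stepG (approx k') k'.+1)
  end.

Lemma approx_good k : Good (approx k) k.+1.
Proof.
elim: k => [|k IH].
  split; first by [].
  split; first by move=> i /=; case: ifP => _; [apply: lin_id | apply: lin_zero].
  split; first by move=> i /=; case: ifP => _; [by [] | apply: even_zero].
  move=> m; rewrite ltnS leqn0 => /eqP -> x y z.
  by rewrite /Delta !conv_at0 /= Hf0 subrr.
by case: (stepG_spec IH (ltn0Sn k)) => _ [_ H].
Qed.

Lemma approx_stable k i : (i <= k)%N -> approx k i = approx i i.
Proof.
elim: k => [|k IH] Hi; first by move: Hi; rewrite leqn0 => /eqP ->.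
case: (eqVneq i k.+1) => [-> //|Hne].
rewrite /= /upd (negbTE Hne) IH //.
by move: Hi; rewrite leq_eqVlt (negbTE Hne) ltnS.
Qed.

Definition phiF i := approx i i.

Lemma phiF_good : Good phiF 0 /\ forall m x y z, Delta br f phiF m x y z = 0.
Proof.
split.
  split; first by [].
  split; first by move=> i; case: (approx_good i) => _ [H _]; apply: H.
  split; first by move=> i; case: (approx_good i) => _ [_ [H _]]; apply: H.
  by [].
move=> m x y z; rewrite (@Delta_eq _ (approx m)).
  by case: (approx_good m) => _ [_ [_ H]]; apply: H.
by move=> i Hi; rewrite /phiF approx_stable.
Qed.

Lemma main_equiv : equiv_def f (null_def br).
Proof.
have [[HP0 [HPl [HPe _]]] HD] := phiF_good.
have Htr : forall m x y z, trh f phiF m x y z = null_def br m x y z.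
  elim/ltn_ind => m IH x y z.
  by rewrite (trh_step Hf HP0 HPl) ?HD ?addr0 // => m' Hm'; apply: IH.
have E : trh f phiF = null_def br.
  apply: functional_extensionality => m; apply: functional_extensionality => x.
  apply: functional_extensionality => y; apply: functional_extensionality => z.
  exact: Htr.
exists phiF; split=> //; split=> // X Y Z.
by rewrite (trh_rel Hf HP0 HPl) E.
Qed.

End Build.

Unset Implicit Arguments.

Theorem theorem4p5 (K : fieldType) (T0 T1 : lmodType K) (delta : K)
    (br : T0 * T1 -> T0 * T1 -> T0 * T1 -> T0 * T1) :
  (delta = 1 \/ delta = -1) ->
  JLSTS delta br ->
  H3_zero delta br ->
  forall f : nat -> T0 * T1 -> T0 * T1 -> T0 * T1 -> T0 * T1,
    deformation delta br f -> equiv_def f (null_def br).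
Proof.
move=> Hd HJ H3 f Hf.
exact: (main_equiv HJ Hd H3 Hf).
Qed.
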